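(* Let $A$ be the $K\times K$ matrix with diagonal entries $\frac{2K-1}{K}$ and all off-diagonal entries $-\frac1K$. Then $A$ is invertible, so for any $\gamma_1,\ldots,\gamma_K\in\mathbb{R}$ the system $A\,(\Gamma^c_1,\ldots,\Gamma^c_K)^T=b$, with $b_j=\gamma_j+\frac1K\sum_{l=1}^{n}\Gamma_l+\frac{\Gamma_\infty}{K}$, has a unique solution. For this solution and every $N\ge1$, the function $$\Psi_N(z)=\sum_{l=1}^{n}\Gamma_l\,\psi^{s*}_N(z,z_l)+\psi^*_{N,\infty}(z)+\sum_{j=1}^{K}\psi^*_{N,j}(z)$$ has circulation exactly $\gamma_j$ around $L_j$ for each $j=1,\ldots,K$.
   Context: Let $K\ge2$, circles $L_j=\{|z-c_j|=R_j\}$ with pairwise disjoint closed disks, $D$ the exterior of all closed disks, $T_j(z)=c_j+\frac{R_j^2}{\bar z-\bar c_j}$ the inversion in $L_j$ ($T_j(c_j)=\infty$, $T_j(\infty)=c_j$). Let $z_1,\ldots,z_n$ be finite points of $D$ with real circulations $\Gamma_1,\ldots,\Gamma_n$, and let $\Gamma_\infty\in\mathbb{R}$. For a starting point $p$ (a finite point of $D$, a center $c_j$, or $\infty$), the level-$M$ points of $p$ are the multiset $T_{i_1}\circ\cdots\circ T_{i_M}(p)$ over words with $i_k\ne i_{k+1}$ (level 0 is $p$). $\psi^s_N(z,z_l)=-\frac{1}{2\pi}\sum_{M=0}^{N}(-1)^M\sum_{\zeta\in\text{level }M\text{ of }z_l}\log|z-\zeta|$, $\psi^{s*}_N=\frac{(K-1)\psi^s_N+\psi^s_{N+1}}{K}$.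 $\psi_{N,\infty}(z)=-\frac{\Gamma_\infty}{2\pi}\sum_{M=1}^{N}(-1)^M\sum_{\zeta\in\text{level }M\text{ of }\infty}\log|z-\zeta|$, $\psi^*_{N,\infty}=\frac{(K-1)\psi_{N,\infty}+\psi_{N+1,\infty}}{K}$. $\psi_{N,j}(z)=-\frac{\Gamma^c_j}{2\pi}\sum_{M=0}^{N}(-1)^M\sum_{\zeta\in\text{level }M\text{ of }c_j,\ \zeta\ne\infty}\log|z-\zeta|$, $\psi^*_{N,j}=\frac{(K-1)\psi_{N,j}+\psi_{N+1,j}}{K}$. Circulation: for a finite sum $\psi(z)=-\frac{1}{2\pi}\sum_k\Gamma_k\log|z-\zeta_k|$ with no $\zeta_k$ on $L_j$, the circulation around $L_j$ is the sum of $\Gamma_k$ over $\zeta_k$ in the open disk bounded by $L_j$ (equivalently $-\oint_{L_j}\partial\psi/\partial n\,ds$, counterclockwise, outward normal). *)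

(* Defs.v *)
From Stdlib Require Import Reals Lra List Arith.
Import ListNotations.
Open Scope R_scope.

(* Points of the plane as pairs of reals; extended points: None = infinity. *)
Definition Point := (R * R)%type.
Definition XPoint := option Point.

Definition pdist (p q : Point) : R :=
  sqrt ((fst p - fst q)^2 + (snd p - snd q)^2).

Definition Peq_dec (p q : Point) : {p = q} + {p <> q}.
Proof.
  destruct p as [a b], q as [c d].
  destruct (Req_EM_T a c) as [->|H1].
  - destruct (Req_EM_T b d) as [->|H2]; [left; reflexivity|right; congruence].
  - right; congruence.
Defined.

Definition sumR (n : nat) (f : nat -> R) : R :=
  fold_right Rplus 0 (map f (seq 0 n)).

(* Inversion in the circle |z - c| = r :
   T(z) = c + r^2/(conj(z - c)) = c + r^2 (z - c)/|z - c|^2,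
   T(c) = infinity, T(infinity) = c. *)
Definition inversion (c : Point) (r : R) (p : XPoint) : XPoint :=
  match p with
  | None => Some c
  | Some z =>
      if Peq_dec z c then None
      else let dx := fst z - fst c in
           let dy := snd z - snd c in
           let d2 := dx^2 + dy^2 in
           Some (fst c + r^2 * dx / d2, snd c + r^2 * dy / d2)
  end.

(* Words (i_1,...,i_M) over {0..K-1} with i_k <> i_{k+1}; the head of the
   list is the outermost index i_1. *)
Fixpoint words (K M : nat) : list (list nat) :=
  match M with
  | O => [[]]
  | S M' =>
      flat_map (fun w =>
        map (fun i => i :: w)
          (filter (fun i => match w with
                            | [] => true
                            | i0 :: _ => negb (Nat.eqb i i0)
                            end) (seq 0 K)))
        (words K M')
  end.

Fixpoint apply_word (c : nat -> Point) (Rad : nat -> R) (w : list nat) (p : XPoint)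
  : XPoint :=
  match w with
  | [] => p
  | i :: w' => inversion (c i) (Rad i) (apply_word c Rad w' p)
  end.

Definition level (K : nat) (c : nat -> Point) (Rad : nat -> R) (p : XPoint) (M : nat)
  : list XPoint :=
  map (fun w => apply_word c Rad w p) (words K M).

(* A log-potential expression: a finite list of (weight Gamma_k, point zeta_k),
   representing psi(z) = -1/(2 pi) sum_k Gamma_k log|z - zeta_k|. *)
Definition LogExpr := list (R * Point).

Definition eval_expr (e : LogExpr) (z : Point) : R :=
  - / (2 * PI) * fold_right Rplus 0 (map (fun gp => fst gp * ln (pdist z (snd gp))) e).

Definition scale_expr (a : R) (e : LogExpr) : LogExpr :=
  map (fun gp => (a * fst gp, snd gp)) e.

Definition finite_pts (g : R) (l : list XPoint) : LogExpr :=
  flat_map (fun p => match p with Some q => [(g, q)] | None => [] end) l.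

Definition alt_levels (K : nat) (c : nat -> Point) (Rad : nat -> R) (p : XPoint)
  (m0 N : nat) : LogExpr :=
  flat_map (fun M => finite_pts ((-1) ^ M) (level K c Rad p M)) (seq m0 (S N - m0)).

Definition psi_s K c Rad (zl : Point) (N : nat) : LogExpr :=
  alt_levels K c Rad (Some zl) 0 N.
Definition psi_inf K c Rad (Ginf : R) (N : nat) : LogExpr :=
  scale_expr Ginf (alt_levels K c Rad None 1 N).
Definition psi_c K c Rad (Gcj : R) (j N : nat) : LogExpr :=
  scale_expr Gcj (alt_levels K c Rad (Some (c j)) 0 N).

Definition star (K : nat) (f : nat -> LogExpr) (N : nat) : LogExpr :=
  scale_expr ((INR K - 1) / INR K) (f N) ++ scale_expr (1 / INR K) (f (S N)).

Definition PsiN (K : nat) (c : nat -> Point) (Rad : nat -> R) (n : nat)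
  (z : nat -> Point) (Gam : nat -> R) (Ginf : R) (Gc : nat -> R) (N : nat) : LogExpr :=
  flat_map (fun l => scale_expr (Gam l) (star K (psi_s K c Rad (z l)) N)) (seq 0 n)
  ++ star K (psi_inf K c Rad Ginf) N
  ++ flat_map (fun j => star K (psi_c K c Rad (Gc j) j) N) (seq 0 K).

Definition avoids_circle (e : LogExpr) (cj : Point) (rj : R) : Prop :=
  forall gp, In gp e -> pdist (snd gp) cj <> rj.

(* Circulation around L_j: sum of the weights of points in the open disk. *)
Definition circulation (e : LogExpr) (cj : Point) (rj : R) : R :=
  fold_right Rplus 0
    (map (fun gp => if Rlt_dec (pdist (snd gp) cj) rj then fst gp else 0) e).

Definition Amat (K : nat) (j k : nat) : R :=
  if Nat.eqb j k then (2 * INR K - 1) / INR K else - (1 / INR K).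

Definition rhs (K n : nat) (gamma Gam : nat -> R) (Ginf : R) (j : nat) : R :=
  gamma j + (1 / INR K) * sumR n Gam + Ginf / INR K.

Definition solves (K n : nat) (gamma Gam : nat -> R) (Ginf : R) (Gc : nat -> R) : Prop :=
  forall j, (j < K)%nat -> sumR K (fun k => Amat K j k * Gc k) = rhs K n gamma Gam Ginf j.

Definition kron (j k : nat) : R := if Nat.eqb j k then 1 else 0.

(* Main.v *)
Require Import Defs.
From Stdlib Require Import Reals List Arith Lra Lia Psatz.
Import ListNotations.
Open Scope R_scope.

Lemma pdist_nonneg p q : 0 <= pdist p q.
Proof. unfold pdist; apply sqrt_pos. Qed.

Lemma pdist_self p : pdist p p = 0.
Proof. unfold pdist. replace ((fst p - fst p)^2 + (snd p - snd p)^2) with 0 by ring. apply sqrt_0. Qed.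

Lemma pdist_sym p q : pdist p q = pdist q p.
Proof. unfold pdist. f_equal; ring. Qed.

Lemma pdist_tri a m b : pdist a b <= pdist a m + pdist m b.
Proof.
  unfold pdist.
  set (u1 := fst a - fst m); set (u2 := snd a - snd m);
  set (v1 := fst m - fst b); set (v2 := snd m - snd b).
  replace ((fst a - fst b)^2 + (snd a - snd b)^2) with ((u1+v1)^2 + (u2+v2)^2)
    by (unfold u1,u2,v1,v2; ring).
  set (U := u1^2+u2^2); set (V := v1^2+v2^2).
  assert (HU : 0 <= U) by (unfold U; nra).
  assert (HV : 0 <= V) by (unfold V; nra).
  assert (Hc : u1*v1+u2*v2 <= sqrt U * sqrt V).
  { rewrite <- sqrt_mult by auto.
    destruct (Rle_lt_dec (u1*v1+u2*v2) 0) as [Hn|Hp].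
    - pose proof (sqrt_pos (U*V)); lra.
    - rewrite <- (sqrt_pow2 (u1*v1+u2*v2)) by lra.
      apply sqrt_le_1_alt. unfold U, V. pose proof (pow2_ge_0 (u1*v2-u2*v1)). nra. }
  assert (0 <= sqrt U) by apply sqrt_pos.
  assert (0 <= sqrt V) by apply sqrt_pos.
  rewrite <- (sqrt_pow2 (sqrt U + sqrt V)) by lra.
  apply sqrt_le_1_alt.
  assert (sqrt U * sqrt U = U) by (apply sqrt_sqrt; auto).
  assert (sqrt V * sqrt V = V) by (apply sqrt_sqrt; auto).
  unfold U, V in *. nra.
Qed.

Lemma inversion_in c r x : 0 < r -> r < pdist x c ->
  exists y, inversion c r (Some x) = Some y /\ pdist y c < r.
Proof.
  intros Hr Hd. unfold inversion. destruct (Peq_dec x c) as [->|Hne].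
  - rewrite pdist_self in Hd; lra.
  - eexists; split; [reflexivity|].
    cbv zeta. unfold pdist in *. cbn [fst snd].
    set (dx := fst x - fst c) in *; set (dy := snd x - snd c) in *.
    set (d2 := dx^2 + dy^2) in *.
    assert (Hd2 : 0 <= d2) by (unfold d2; nra).
    assert (Hrd : r^2 < d2).
    { rewrite <- (pow2_sqrt d2) by auto. nra. }
    assert (Hpos : 0 < d2) by nra.
    replace ((fst c + r ^ 2 * dx / d2 - fst c) ^ 2 + (snd c + r ^ 2 * dy / d2 - snd c) ^ 2)
      with (r^4 / d2).
    2:{ unfold d2 in *. field. lra. }
    assert (H : sqrt (r^4/d2) < sqrt (r^2)).
    { apply sqrt_lt_1_alt. split.
      + apply Rle_mult_inv_pos; [nra| lra].
      + apply (Rmult_lt_reg_r d2); auto. unfold Rdiv. rewrite Rmult_assoc, Rinv_l by lra. rewrite Rmult_1_r. replace (r^4) with (r^2*r^2) by ring. apply Rmult_lt_compat_l; nra. }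
    rewrite sqrt_pow2 in H by lra. exact H.
Qed.
Definition sumL {A} (f : A -> R) (l : list A) : R := fold_right Rplus 0 (map f l).

Lemma sumL_nil {A} (f : A -> R) : sumL f [] = 0. Proof. reflexivity. Qed.
Lemma sumL_cons {A} (f : A -> R) x l : sumL f (x :: l) = f x + sumL f l. Proof. reflexivity. Qed.

Lemma sumL_app {A} (f : A -> R) l1 l2 : sumL f (l1 ++ l2) = sumL f l1 + sumL f l2.
Proof. induction l1; simpl; [unfold sumL; simpl; ring|]. unfold sumL in *; simpl; rewrite IHl1; ring. Qed.

Lemma sumL_map {A B} (f : B -> R) (g : A -> B) l : sumL f (map g l) = sumL (fun x => f (g x)) l.
Proof. unfold sumL. rewrite map_map. reflexivity. Qed.

Lemma sumL_flat_map {A B} (f : B -> R) (g : A -> list B) l :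
  sumL f (flat_map g l) = sumL (fun x => sumL f (g x)) l.
Proof. induction l; simpl; [reflexivity|]. rewrite sumL_app, sumL_cons, IHl. reflexivity. Qed.

Lemma sumL_ext_in {A} (f g : A -> R) l : (forall x, In x l -> f x = g x) -> sumL f l = sumL g l.
Proof. induction l; intros H; [reflexivity|]. rewrite !sumL_cons. f_equal.
  - apply H; left; auto.
  - apply IHl. intros; apply H; right; auto. Qed.

Lemma sumL_plus {A} (f g : A -> R) l : sumL (fun x => f x + g x) l = sumL f l + sumL g l.
Proof. induction l; [unfold sumL; simpl; ring|]. rewrite !sumL_cons, IHl. ring. Qed.

Lemma sumL_minus {A} (f g : A -> R) l : sumL (fun x => f x - g x) l = sumL f l - sumL g l.
Proof. induction l; [unfold sumL; simpl; ring|]. rewrite !sumL_cons, IHl. ring. Qed.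

Lemma sumL_scal {A} (a : R) (f : A -> R) l : sumL (fun x => a * f x) l = a * sumL f l.
Proof. induction l; [unfold sumL; simpl; ring|]. rewrite !sumL_cons, IHl. ring. Qed.

Lemma sumL_const {A} (a : R) (l : list A) : sumL (fun _ => a) l = INR (length l) * a.
Proof. induction l; [unfold sumL; simpl; ring|]. rewrite sumL_cons, IHl. simpl length. rewrite S_INR. ring. Qed.

Lemma sumL_filter {A} (f : A -> R) (P : A -> bool) l :
  sumL f (filter P l) = sumL (fun x => if P x then f x else 0) l.
Proof. induction l; [reflexivity|]. cbn [filter]. rewrite sumL_cons. destruct (P a); [rewrite sumL_cons|]; rewrite IHl; cbv beta iota; ring. Qed.

Lemma sumL_kron_out (f : nat -> R) j s n : (j < s)%nat ->
  sumL (fun i => if Nat.eqb i j then f i else 0) (seq s n) = 0.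
Proof.
  revert s; induction n; intros s Hs; [reflexivity|].
  simpl seq. rewrite sumL_cons, IHn by lia.
  destruct (Nat.eqb_spec s j); [lia|ring].
Qed.

Lemma sumL_kron (f : nat -> R) j s n : (s <= j < s + n)%nat ->
  sumL (fun i => if Nat.eqb i j then f i else 0) (seq s n) = f j.
Proof.
  revert s; induction n; intros s Hs; [lia|].
  simpl seq. rewrite sumL_cons.
  destruct (Nat.eqb_spec s j).
  - subst. rewrite sumL_kron_out by lia. ring.
  - rewrite IHn by lia. ring.
Qed.

Lemma sumR_sumL K f : sumR K f = sumL f (seq 0 K).
Proof. reflexivity. Qed.

Lemma words_S_in K M w : In w (words K (S M)) ->
  exists i w', w = i :: w' /\ (i < K)%nat /\ In w' (words K M) /\
    (match w' with [] => True | i0 :: _ => i <> i0 end).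
Proof.
  simpl. intros H. apply in_flat_map in H as [w' [Hw' Hin]].
  apply in_map_iff in Hin as [i [<- Hi]]. apply filter_In in Hi as [Hi Hf].
  apply in_seq in Hi. exists i, w'. repeat split; auto; try lia.
  destruct w' as [|i0 w0]; auto. apply Bool.negb_true_iff in Hf. apply Nat.eqb_neq in Hf. auto.
Qed.

Lemma sumL_words_S K M (f : list nat -> R) : sumL f (words K (S M)) =
  sumL (fun w => sumL (fun i => if (match w with [] => true | i0 :: _ => negb (Nat.eqb i i0) end)
     then f (i :: w) else 0) (seq 0 K)) (words K M).
Proof.
  simpl words. rewrite sumL_flat_map. apply sumL_ext_in. intros w _.
  rewrite sumL_map, sumL_filter. reflexivity.
Qed.

Definition hd_is (j : nat) (w : list nat) : R :=
  match w with i :: _ => if Nat.eqb i j then 1 else 0 | [] => 0 end.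

Lemma inner_one K h : (h < K)%nat ->
  sumL (fun i => if negb (Nat.eqb i h) then 1 else 0) (seq 0 K) = INR K - 1.
Proof.
  intros Hh. rewrite (sumL_ext_in _ (fun i => 1 - (if Nat.eqb i h then 1 else 0))).
  - rewrite sumL_minus, sumL_const, length_seq, sumL_kron by lia. ring.
  - intros i _. destruct (Nat.eqb i h); simpl; ring.
Qed.

Lemma inner_hd K h j : (h < K)%nat -> (j < K)%nat ->
  sumL (fun i => if negb (Nat.eqb i h) then (if Nat.eqb i j then 1 else 0) else 0) (seq 0 K)
  = 1 - (if Nat.eqb h j then 1 else 0).
Proof.
  intros Hh Hj. rewrite (sumL_ext_in _ (fun i => if Nat.eqb i j then (if negb (Nat.eqb i h) then 1 else 0) else 0)).
  - rewrite sumL_kron by lia. rewrite (Nat.eqb_sym j h). destruct (Nat.eqb h j); simpl; ring.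
  - intros i _. destruct (Nat.eqb i h), (Nat.eqb i j); reflexivity.
Qed.

Lemma words_hd K M w : In w (words K (S M)) -> exists h w', w = h :: w' /\ (h < K)%nat.
Proof. intros H. destruct (words_S_in _ _ _ H) as [i [w' [-> [Hi _]]]]. eauto. Qed.

Lemma count_words K j : (j < K)%nat -> forall M,
  sumL (hd_is j) (words K (S M)) = (INR K - 1)^M /\
  sumL (fun _ => 1) (words K (S M)) = INR K * (INR K - 1)^M.
Proof.
  intros Hj. induction M.
  - rewrite !sumL_words_S. simpl words. rewrite !sumL_cons, !sumL_nil.
    simpl hd_is. rewrite sumL_kron by lia.
    rewrite sumL_const, length_seq. split; ring.
  - destruct IHM as [IH1 IH2]. rewrite !(sumL_words_S K (S M)). split.
    + rewrite (sumL_ext_in _ (fun w => 1 - hd_is j w)).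
      * rewrite sumL_minus, IH1, IH2. simpl. ring.
      * intros w Hw. destruct (words_hd _ _ _ Hw) as [h [w' [-> Hh]]].
        simpl hd_is. apply inner_hd; auto.
    + rewrite (sumL_ext_in _ (fun w => (INR K - 1) * 1)).
      * rewrite sumL_scal, IH2. simpl. ring.
      * intros w Hw. destruct (words_hd _ _ _ Hw) as [h [w' [-> Hh]]].
        rewrite Rmult_1_r. apply inner_one; auto.
Qed.

Definition admissible (c : nat -> Point) (Rad : nat -> R) (p : XPoint) (i : nat) : Prop :=
  match p with None => True | Some x => Rad i < pdist x (c i) end.

Definition good (c : nat -> Point) (Rad : nat -> R) (p : XPoint) (K : nat) (w : list nat) : Prop :=
  exists i w' q, w = i :: w' /\ (i < K)%nat /\ apply_word c Rad w p = Some q /\ pdist q (c i) < Rad i.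

Lemma out_of_other K (c : nat -> Point) (Rad : nat -> R)
  (Hdisj : forall i j, (i < K)%nat -> (j < K)%nat -> i <> j ->
             Rad i + Rad j < pdist (c i) (c j)) i j q :
  (i < K)%nat -> (j < K)%nat -> i <> j -> pdist q (c i) < Rad i -> Rad j < pdist q (c j).
Proof.
  intros Hi Hj Hij Hq. pose proof (Hdisj i j Hi Hj Hij).
  pose proof (pdist_tri (c i) q (c j)). rewrite (pdist_sym (c i) q) in H0. lra.
Qed.

Lemma good_lemma K (c : nat -> Point) (Rad : nat -> R)
  (HR : forall j, (j < K)%nat -> 0 < Rad j)
  (Hdisj : forall i j, (i < K)%nat -> (j < K)%nat -> i <> j ->
             Rad i + Rad j < pdist (c i) (c j)) p
  (Hsrc : forall i, (i < K)%nat -> apply_word c Rad [i] p = None \/ admissible c Rad p i) :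
  forall M w, In w (words K (S M)) ->
    good c Rad p K w \/ (M = 0%nat /\ apply_word c Rad w p = None).
Proof.
  induction M; intros w Hw.
  - destruct (words_S_in _ _ _ Hw) as [i [w' [-> [Hi [Hw' _]]]]].
    simpl in Hw'. destruct Hw' as [<-|[]].
    destruct (Hsrc i Hi) as [Hn|Ha]; [right; auto|left].
    destruct p as [x|]; simpl in Ha.
    + destruct (inversion_in (c i) (Rad i) x (HR i Hi) Ha) as [y [Hy1 Hy2]].
      exists i, [], y. repeat split; auto.
    + exists i, [], (c i). repeat split; auto. rewrite pdist_self. apply HR; auto.
  - destruct (words_S_in _ _ _ Hw) as [i [w' [-> [Hi [Hw' Hne]]]]].
    left. destruct (IHM w' Hw') as [[h [w0 [q [-> [Hh [Hq1 Hq2]]]]]] | [_ Hf]].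
    2:{ exists i, w', (c i). repeat split; auto. simpl. rewrite Hf. reflexivity.
        rewrite pdist_self. apply HR; auto. }
    assert (Rad i < pdist q (c i)) by (apply (out_of_other K c Rad Hdisj h i); auto).
    destruct (inversion_in (c i) (Rad i) q (HR i Hi) H) as [y [Hy1 Hy2]].
    exists i, (h :: w0), y. repeat split; auto. simpl. simpl in Hq1. rewrite Hq1. exact Hy1.
Qed.

Definition cntpt (cj : Point) (rj : R) (p : XPoint) : R :=
  match p with Some q => if Rlt_dec (pdist q cj) rj then 1 else 0 | None => 0 end.

Lemma circ_sumL e cj rj : circulation e cj rj =
  sumL (fun gp => if Rlt_dec (pdist (snd gp) cj) rj then fst gp else 0) e.
Proof. reflexivity. Qed.

Lemma circ_app e1 e2 cj rj : circulation (e1 ++ e2) cj rj = circulation e1 cj rj + circulation e2 cj rj.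
Proof. rewrite !circ_sumL, sumL_app. reflexivity. Qed.

Lemma circ_scale a e cj rj : circulation (scale_expr a e) cj rj = a * circulation e cj rj.
Proof.
  rewrite !circ_sumL. unfold scale_expr. rewrite sumL_map, <- sumL_scal.
  apply sumL_ext_in. intros gp _. simpl. destruct (Rlt_dec _ _); ring.
Qed.

Lemma circ_flat_map {A} (f : A -> LogExpr) l cj rj :
  circulation (flat_map f l) cj rj = sumL (fun x => circulation (f x) cj rj) l.
Proof. rewrite circ_sumL, sumL_flat_map. reflexivity. Qed.

Lemma circ_finite_pts g l cj rj :
  circulation (finite_pts g l) cj rj = g * sumL (cntpt cj rj) l.
Proof.
  induction l as [|a l IH]; [unfold circulation, sumL; simpl; ring|].
  unfold finite_pts in *. cbn [flat_map]. rewrite circ_app, IH, sumL_cons.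
  destruct a as [q|]; simpl; [|unfold circulation; simpl; ring].
  unfold circulation; simpl. destruct (Rlt_dec _ _); ring.
Qed.

Lemma circ_alt K c Rad p m0 N cj rj :
  circulation (alt_levels K c Rad p m0 N) cj rj =
  sumL (fun M => (-1)^M * sumL (cntpt cj rj) (level K c Rad p M)) (seq m0 (S N - m0)).
Proof.
  unfold alt_levels. rewrite circ_flat_map. apply sumL_ext_in. intros M _.
  apply circ_finite_pts.
Qed.

Lemma circ_star K f N cj rj :
  circulation (star K f N) cj rj =
  (INR K - 1) / INR K * circulation (f N) cj rj + 1 / INR K * circulation (f (S N)) cj rj.
Proof. unfold star. rewrite circ_app, !circ_scale. reflexivity. Qed.

Lemma good_cnt K (c : nat -> Point) (Rad : nat -> R)
  (Hdisj : forall i j, (i < K)%nat -> (j < K)%nat -> i <> j ->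
             Rad i + Rad j < pdist (c i) (c j)) p w j :
  (j < K)%nat -> good c Rad p K w -> cntpt (c j) (Rad j) (apply_word c Rad w p) = hd_is j w.
Proof.
  intros Hj [i [w' [q [-> [Hi [Hq1 Hq2]]]]]]. rewrite Hq1. simpl.
  destruct (Nat.eqb_spec i j).
  - subst. destruct (Rlt_dec _ _); [reflexivity|contradiction].
  - pose proof (out_of_other K c Rad Hdisj i j q Hi Hj n Hq2).
    destruct (Rlt_dec _ _); [lra|reflexivity].
Qed.

Lemma adm_not_none K (c : nat -> Point) (Rad : nat -> R)
  (HR : forall j, (j < K)%nat -> 0 < Rad j) p i :
  (i < K)%nat -> admissible c Rad p i -> apply_word c Rad [i] p <> None.
Proof.
  intros Hi Ha. destruct p as [x|]; [|simpl; discriminate]. unfold admissible in Ha. cbn [apply_word].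
  destruct (inversion_in (c i) (Rad i) x (HR i Hi) Ha) as [y [Hy _]]. rewrite Hy. discriminate.
Qed.

Lemma all_good_adm K (c : nat -> Point) (Rad : nat -> R)
  (HR : forall j, (j < K)%nat -> 0 < Rad j)
  (Hdisj : forall i j, (i < K)%nat -> (j < K)%nat -> i <> j ->
             Rad i + Rad j < pdist (c i) (c j)) p
  (Hadm : forall i, (i < K)%nat -> admissible c Rad p i) :
  forall M w, In w (words K (S M)) -> good c Rad p K w.
Proof.
  intros M w Hw.
  destruct (good_lemma K c Rad HR Hdisj p (fun i Hi => or_intror (Hadm i Hi)) M w Hw) as [G|[-> Hn]]; auto.
  destruct (words_S_in _ _ _ Hw) as [i [w' [-> [Hi [Hw' _]]]]].
  simpl in Hw'. destruct Hw' as [<-|[]]. exfalso. exact (adm_not_none K c Rad HR p i Hi (Hadm i Hi) Hn).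
Qed.

Lemma level_cnt_good K (c : nat -> Point) (Rad : nat -> R)
  (Hdisj : forall i j, (i < K)%nat -> (j < K)%nat -> i <> j ->
             Rad i + Rad j < pdist (c i) (c j)) p M j :
  (j < K)%nat -> (forall w, In w (words K (S M)) -> good c Rad p K w) ->
  sumL (cntpt (c j) (Rad j)) (level K c Rad p (S M)) = (INR K - 1)^M.
Proof.
  intros Hj Hg. unfold level. rewrite sumL_map.
  rewrite (sumL_ext_in _ (hd_is j)).
  - apply count_words; auto.
  - intros w Hw. apply good_cnt with K; auto.
Qed.

Definition Tn (K N : nat) : R := sumL (fun M => (-1)^(S M) * (INR K - 1)^M) (seq 0 N).

Lemma Tn_S K N : Tn K (S N) = Tn K N + (-1)^(S N) * (INR K - 1)^N.
Proof. unfold Tn. rewrite seq_S, sumL_app, sumL_cons, sumL_nil. simpl (0 + N)%nat. ring. Qed.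

Lemma Tn_closed K N : INR K * Tn K N = (-1)^N * (INR K - 1)^N - 1.
Proof.
  induction N.
  - unfold Tn; simpl. unfold sumL; simpl. ring.
  - rewrite Tn_S, Rmult_plus_distr_l, IHN. simpl. ring.
Qed.

Lemma star_val K N x : (1 <= K)%nat ->
  (INR K - 1) / INR K * (x + Tn K N) + 1 / INR K * (x + Tn K (S N)) = x - 1 / INR K.
Proof.
  intros HK. assert (HKp : 0 < INR K) by (apply lt_0_INR; lia).
  rewrite Tn_S. pose proof (Tn_closed K N) as H.
  apply (Rmult_eq_reg_l (INR K)); [|lra].
  field_simplify; [|lra|lra]. simpl. nra.
Qed.

Lemma level0_cnt K c Rad p cj rj : sumL (cntpt cj rj) (level K c Rad p 0) = cntpt cj rj p.
Proof. unfold level; simpl. unfold sumL; simpl. ring. Qed.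

Lemma circ_psi_s K (c : nat -> Point) (Rad : nat -> R)
  (HR : forall j, (j < K)%nat -> 0 < Rad j)
  (Hdisj : forall i j, (i < K)%nat -> (j < K)%nat -> i <> j ->
             Rad i + Rad j < pdist (c i) (c j)) zl N j :
  (j < K)%nat -> (forall i, (i < K)%nat -> Rad i < pdist zl (c i)) ->
  circulation (psi_s K c Rad zl N) (c j) (Rad j) = Tn K N.
Proof.
  intros Hj Hz. unfold psi_s. rewrite circ_alt.
  replace (S N - 0)%nat with (S N) by lia. simpl seq. rewrite sumL_cons, level0_cnt.
  simpl cntpt. destruct (Rlt_dec _ _) as [Hl|_]; [pose proof (Hz j Hj); lra|].
  rewrite <- seq_shift, sumL_map. unfold Tn.
  rewrite Rmult_0_r, Rplus_0_l. apply sumL_ext_in. intros M _.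
  rewrite (level_cnt_good K c Rad Hdisj); auto.
  apply all_good_adm; auto.
Qed.

Lemma circ_psi_inf K (c : nat -> Point) (Rad : nat -> R)
  (HR : forall j, (j < K)%nat -> 0 < Rad j)
  (Hdisj : forall i j, (i < K)%nat -> (j < K)%nat -> i <> j ->
             Rad i + Rad j < pdist (c i) (c j)) Ginf N j :
  (j < K)%nat ->
  circulation (psi_inf K c Rad Ginf N) (c j) (Rad j) = Ginf * Tn K N.
Proof.
  intros Hj. unfold psi_inf. rewrite circ_scale, circ_alt. f_equal.
  replace (S N - 1)%nat with N by lia.
  rewrite <- seq_shift, sumL_map. unfold Tn.
  apply sumL_ext_in. intros M _.
  rewrite (level_cnt_good K c Rad Hdisj); auto.
  apply all_good_adm; auto. intros; exact I.
Qed.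

Lemma src_ck K (c : nat -> Point) (Rad : nat -> R)
  (HR : forall j, (j < K)%nat -> 0 < Rad j)
  (Hdisj : forall i j, (i < K)%nat -> (j < K)%nat -> i <> j ->
             Rad i + Rad j < pdist (c i) (c j)) k :
  (k < K)%nat -> forall i, (i < K)%nat ->
  apply_word c Rad [i] (Some (c k)) = None \/ admissible c Rad (Some (c k)) i.
Proof.
  intros Hk i Hi. destruct (Nat.eq_dec i k) as [->|Hne].
  - left. cbn [apply_word]. unfold inversion. destruct (Peq_dec (c k) (c k)); [reflexivity|congruence].
  - right. simpl. pose proof (Hdisj k i Hk Hi (fun e => Hne (eq_sym e))). pose proof (HR k Hk). lra.
Qed.

Lemma circ_psi_c_raw K (c : nat -> Point) (Rad : nat -> R)
  (HR : forall j, (j < K)%nat -> 0 < Rad j)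
  (Hdisj : forall i j, (i < K)%nat -> (j < K)%nat -> i <> j ->
             Rad i + Rad j < pdist (c i) (c j)) k N j :
  (k < K)%nat -> (j < K)%nat -> (1 <= N)%nat ->
  circulation (alt_levels K c Rad (Some (c k)) 0 N) (c j) (Rad j) =
  2 * (if Nat.eqb k j then 1 else 0) + Tn K N.
Proof.
  intros Hk Hj HN. rewrite circ_alt.
  replace (S N - 0)%nat with (S N) by lia. simpl seq. rewrite sumL_cons, level0_cnt.
  assert (E0 : cntpt (c j) (Rad j) (Some (c k)) = if Nat.eqb k j then 1 else 0).
  { simpl. destruct (Nat.eqb_spec k j).
    - subst. rewrite pdist_self. destruct (Rlt_dec _ _); [reflexivity|]. pose proof (HR j Hj); lra.
    - pose proof (Hdisj k j Hk Hj n). pose proof (HR k Hk). destruct (Rlt_dec _ _); [lra|reflexivity]. }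
  rewrite E0. rewrite <- seq_shift, sumL_map.
  set (d := if Nat.eqb k j then 1 else 0).
  rewrite (sumL_ext_in _ (fun M => (-1)^(S M) * (INR K - 1)^M - (if Nat.eqb M 0 then (-1) * d else 0))).
  - rewrite sumL_minus. fold (Tn K N). rewrite sumL_kron by lia. simpl pow. ring.
  - intros M HM. destruct M as [|M].
    + simpl Nat.eqb. cbv iota.
      unfold level. rewrite sumL_map, sumL_words_S. simpl words. rewrite sumL_cons, sumL_nil.
      rewrite (sumL_ext_in _ (fun i => if Nat.eqb i j then (if Nat.eqb i k then 0 else 1) else 0)).
      * rewrite sumL_kron by lia. unfold d. rewrite (Nat.eqb_sym j k).
        destruct (Nat.eqb k j); simpl; ring.
      * intros i Hi. apply in_seq in Hi. simpl (if true then _ else _).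
        destruct (Nat.eqb_spec i k) as [->|Hne].
        -- cbn [apply_word]. unfold inversion. destruct (Peq_dec (c k) (c k)); [|congruence].
           simpl. destruct (Nat.eqb k j); reflexivity.
        -- assert (Ha : Rad i < pdist (c k) (c i)).
           { pose proof (Hdisj k i Hk ltac:(lia) (fun e => Hne (eq_sym e))). pose proof (HR k Hk). lra. }
           destruct (inversion_in (c i) (Rad i) (c k) (HR i ltac:(lia)) Ha) as [y [Hy1 Hy2]].
           assert (G : good c Rad (Some (c k)) K [i]).
           { exists i, [], y. repeat split; auto. lia. }
           rewrite (good_cnt K c Rad Hdisj _ _ j Hj G). simpl. reflexivity.
    + simpl (Nat.eqb (S M) 0). rewrite (level_cnt_good K c Rad Hdisj); auto. ring.
      intros w Hw.
      destruct (good_lemma K c Rad HR Hdisj _ (src_ck K c Rad HR Hdisj k Hk) (S M) w Hw) as [G|[Hf _]]; [exact G|discriminate].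
Qed.

Definition located (K : nat) (c : nat -> Point) (Rad : nat -> R) (q : Point) : Prop :=
  (forall i, (i < K)%nat -> Rad i < pdist q (c i)) \/ (exists i, (i < K)%nat /\ pdist q (c i) < Rad i).

Definition AllLoc K c Rad (e : LogExpr) : Prop := forall gp, In gp e -> located K c Rad (snd gp).

Lemma loc_avoid K (c : nat -> Point) (Rad : nat -> R)
  (Hdisj : forall i j, (i < K)%nat -> (j < K)%nat -> i <> j ->
             Rad i + Rad j < pdist (c i) (c j)) e j :
  (j < K)%nat -> AllLoc K c Rad e -> avoids_circle e (c j) (Rad j).
Proof.
  intros Hj HA gp Hin. destruct (HA gp Hin) as [H|[i [Hi H]]].
  - pose proof (H j Hj); lra.
  - destruct (Nat.eq_dec i j) as [->|Hne]; [lra|].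
    pose proof (out_of_other K c Rad Hdisj i j _ Hi Hj Hne H). lra.
Qed.

Lemma AllLoc_app K c Rad e1 e2 : AllLoc K c Rad e1 -> AllLoc K c Rad e2 -> AllLoc K c Rad (e1 ++ e2).
Proof. intros H1 H2 gp Hin. apply in_app_or in Hin as [H|H]; auto. Qed.

Lemma AllLoc_scale K c Rad a e : AllLoc K c Rad e -> AllLoc K c Rad (scale_expr a e).
Proof. intros H gp Hin. unfold scale_expr in Hin. apply in_map_iff in Hin as [x [<- Hx]]. apply (H x Hx). Qed.

Lemma AllLoc_flat_map {A} K c Rad (f : A -> LogExpr) l :
  (forall x, In x l -> AllLoc K c Rad (f x)) -> AllLoc K c Rad (flat_map f l).
Proof. intros H gp Hin. apply in_flat_map in Hin as [x [Hx Hg]]. apply (H x Hx gp Hg). Qed.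

Lemma AllLoc_star K c Rad f N : AllLoc K c Rad (f N) -> AllLoc K c Rad (f (S N)) ->
  AllLoc K c Rad (star K f N).
Proof. intros. unfold star. apply AllLoc_app; apply AllLoc_scale; auto. Qed.

Lemma AllLoc_alt K (c : nat -> Point) (Rad : nat -> R) p m0 N :
  (forall M q, In (Some q) (level K c Rad p M) -> located K c Rad q) ->
  AllLoc K c Rad (alt_levels K c Rad p m0 N).
Proof.
  intros H. unfold alt_levels. apply AllLoc_flat_map. intros M _ gp Hin.
  unfold finite_pts in Hin. apply in_flat_map in Hin as [x [Hx Hg]].
  destruct x as [q|]; [|destruct Hg]. destruct Hg as [<-|[]]. simpl. apply (H M q Hx).
Qed.

Lemma level_loc K (c : nat -> Point) (Rad : nat -> R)
  (HR : forall j, (j < K)%nat -> 0 < Rad j)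
  (Hdisj : forall i j, (i < K)%nat -> (j < K)%nat -> i <> j ->
             Rad i + Rad j < pdist (c i) (c j)) p
  (Hsrc : forall i, (i < K)%nat -> apply_word c Rad [i] p = None \/ admissible c Rad p i)
  (H0 : forall q, p = Some q -> located K c Rad q) :
  forall M q, In (Some q) (level K c Rad p M) -> located K c Rad q.
Proof.
  intros M q Hin. destruct M as [|M].
  - unfold level in Hin. simpl in Hin. destruct Hin as [E|[]]. apply H0; auto.
  - unfold level in Hin. apply in_map_iff in Hin as [w [Hw Hin]].
    destruct (good_lemma K c Rad HR Hdisj p Hsrc M w Hin) as [[i [w' [q' [_ [Hi [Hq1 Hq2]]]]]]|[_ Hn]].
    + right. exists i. rewrite Hq1 in Hw. injection Hw as ->. auto.
    + congruence.
Qed.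

Lemma A_apply K j (g : nat -> R) : (1 <= K)%nat -> (j < K)%nat ->
  sumR K (fun m => Amat K j m * g m) = 2 * g j - 1 / INR K * sumR K g.
Proof.
  intros HK Hj. assert (HKp : 0 < INR K) by (apply lt_0_INR; lia).
  rewrite !sumR_sumL.
  rewrite (sumL_ext_in _ (fun m => 2 * (if Nat.eqb m j then g m else 0) - 1 / INR K * g m)).
  - rewrite sumL_minus, sumL_scal, sumL_scal, sumL_kron by lia. reflexivity.
  - intros m _. unfold Amat. rewrite (Nat.eqb_sym j m). destruct (Nat.eqb m j); field; lra.
Qed.

Lemma sum_B K k : (1 <= K)%nat -> (k < K)%nat ->
  sumR K (fun m => (kron m k + 1 / INR K) / 2) = 1.
Proof.
  intros HK Hk. assert (HKp : 0 < INR K) by (apply lt_0_INR; lia).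
  rewrite sumR_sumL.
  rewrite (sumL_ext_in _ (fun m => / 2 * (if Nat.eqb m k then 1 else 0) + 1 / (2 * INR K))).
  - rewrite sumL_plus, sumL_scal, sumL_kron, sumL_const, length_seq by lia. field. lra.
  - intros m _. unfold kron. destruct (Nat.eqb m k); field; lra.
Qed.

Theorem mainTheorem9
  (K : nat) (c : nat -> Point) (Rad : nat -> R)
  (n : nat) (z : nat -> Point) (Gam : nat -> R) (Ginf : R)
  (HK : (2 <= K)%nat)
  (HR : forall j, (j < K)%nat -> 0 < Rad j)
  (Hdisj : forall i j, (i < K)%nat -> (j < K)%nat -> i <> j ->
             Rad i + Rad j < pdist (c i) (c j))
  (HzD : forall l j, (l < n)%nat -> (j < K)%nat -> Rad j < pdist (z l) (c j)) :
  (exists B : nat -> nat -> R,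
     forall j k, (j < K)%nat -> (k < K)%nat ->
       sumR K (fun m => Amat K j m * B m k) = kron j k /\
       sumR K (fun m => B j m * Amat K m k) = kron j k) /\
  forall gamma : nat -> R,
    exists Gc : nat -> R,
      solves K n gamma Gam Ginf Gc /\
      (forall Gc', solves K n gamma Gam Ginf Gc' ->
         forall j, (j < K)%nat -> Gc' j = Gc j) /\
      (forall N, (1 <= N)%nat -> forall j, (j < K)%nat ->
         avoids_circle (PsiN K c Rad n z Gam Ginf Gc N) (c j) (Rad j) /\
         circulation (PsiN K c Rad n z Gam Ginf Gc N) (c j) (Rad j) = gamma j).
Proof.
  assert (HK1 : (1 <= K)%nat) by lia.
  assert (HKp : 0 < INR K) by (apply lt_0_INR; lia).
  split.
  { exists (fun m k => (kron m k + 1 / INR K) / 2). intros j k Hj Hk. split.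
    - rewrite (A_apply K j (fun m => (kron m k + 1 / INR K) / 2)) by auto.
      rewrite sum_B by auto. cbv beta. field. lra.
    - rewrite (sumR_sumL K), (sumL_ext_in _ (fun m => Amat K k m * ((kron m j + 1 / INR K) / 2))).
      + rewrite <- sumR_sumL, A_apply, sum_B by auto. cbv beta. unfold kron. rewrite (Nat.eqb_sym k j). field. lra.
      + intros m _. unfold Amat, kron. rewrite (Nat.eqb_sym m k), (Nat.eqb_sym m j). ring. }
  intros gamma.
  set (r := rhs K n gamma Gam Ginf).
  set (SS := sumR K r).
  set (Gc := fun j => (r j + SS / INR K) / 2).
  assert (HSG : sumR K Gc = SS).
  { unfold Gc. rewrite sumR_sumL.
    rewrite (sumL_ext_in _ (fun j => / 2 * r j + SS / (2 * INR K))).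
    - rewrite sumL_plus, sumL_scal, sumL_const, length_seq. rewrite <- sumR_sumL. change (sumR K r) with SS. field. lra.
    - intros; field; lra. }
  assert (Hsol : solves K n gamma Gam Ginf Gc).
  { intros j Hj. rewrite A_apply by auto. rewrite HSG. fold r. unfold Gc. field. lra. }
  exists Gc. split; [exact Hsol|]. split.
  { intros Gc' Hs j Hj.
    assert (Hp : forall j, (j < K)%nat -> 2 * Gc' j - 1 / INR K * sumR K Gc' = r j).
    { intros i Hi. rewrite <- A_apply by auto. apply Hs; auto. }
    assert (HS' : sumR K Gc' = SS).
    { unfold SS.
      assert (E : sumR K r = sumR K (fun i => 2 * Gc' i - 1 / INR K * sumR K Gc')).
      { rewrite !(sumR_sumL K). apply sumL_ext_in. intros i Hi. apply in_seq in Hi. symmetry. apply Hp. lia. }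
      rewrite E, (sumR_sumL K (fun i => _ - _)), sumL_minus, sumL_scal, sumL_const, length_seq, <- sumR_sumL.
      field. lra. }
    pose proof (Hp j Hj). unfold Gc. rewrite <- HS'. lra. }
  intros N HN j Hj. split.
  - apply (loc_avoid K c Rad Hdisj); auto.
    unfold PsiN. apply AllLoc_app; [|apply AllLoc_app].
    + apply AllLoc_flat_map. intros l Hl. apply in_seq in Hl. apply AllLoc_scale.
      assert (Hz : forall i, (i < K)%nat -> Rad i < pdist (z l) (c i)) by (intros; apply HzD; lia).
      apply AllLoc_star; unfold psi_s; apply AllLoc_alt; apply (level_loc K c Rad HR Hdisj).
      all: try (intros i Hi; right; apply Hz; auto).
      all: intros q E; injection E as <-; left; auto.
    + apply AllLoc_star; unfold psi_inf; apply AllLoc_scale; apply AllLoc_alt;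
        apply (level_loc K c Rad HR Hdisj); try (intros; right; exact I); intros; discriminate.
    + apply AllLoc_flat_map. intros k Hk. apply in_seq in Hk.
      apply AllLoc_star; unfold psi_c; apply AllLoc_scale; apply AllLoc_alt;
        apply (level_loc K c Rad HR Hdisj); try (apply src_ck; auto; lia);
        intros q E; injection E as <-; right; exists k; (split; [lia|rewrite pdist_self; apply HR; lia]).
  - unfold PsiN. rewrite !circ_app, !circ_flat_map, circ_star.
    rewrite (circ_psi_inf K c Rad HR Hdisj) by auto.
    rewrite (circ_psi_inf K c Rad HR Hdisj) by auto.
    assert (E1 : (INR K - 1) / INR K * (Ginf * Tn K N) + 1 / INR K * (Ginf * Tn K (Datatypes.S N)) = Ginf * (- (1 / INR K))).
    { pose proof (star_val K N 0 HK1) as H. rewrite !Rplus_0_l in H.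
      transitivity (Ginf * ((INR K - 1) / INR K * Tn K N + 1 / INR K * Tn K (Datatypes.S N))); [ring|].
      rewrite H. ring. }
    rewrite E1.
    rewrite (sumL_ext_in _ (fun l => - (1 / INR K) * Gam l)).
    2:{ intros l Hl. apply in_seq in Hl. rewrite circ_scale, circ_star.
        rewrite !(circ_psi_s K c Rad HR Hdisj) by (auto; intros; apply HzD; lia).
        pose proof (star_val K N 0 HK1) as H. rewrite !Rplus_0_l in H.
        transitivity (Gam l * ((INR K - 1) / INR K * Tn K N + 1 / INR K * Tn K (Datatypes.S N))); [ring|].
        rewrite H. ring. }
    rewrite (sumL_ext_in (fun k => circulation (star K (psi_c K c Rad (Gc k) k) N) (c j) (Rad j)) (fun k => 2 * (if Nat.eqb k j then Gc k else 0) - 1 / INR K * Gc k)).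
    2:{ intros k Hk. apply in_seq in Hk. cbv beta. rewrite circ_star. unfold psi_c. rewrite !circ_scale.
        rewrite !(circ_psi_c_raw K c Rad HR Hdisj) by (auto; lia).
        pose proof (star_val K N (2 * (if Nat.eqb k j then 1 else 0)) HK1).
        transitivity (Gc k * ((INR K - 1) / INR K * (2 * (if Nat.eqb k j then 1 else 0) + Tn K N) +
          1 / INR K * (2 * (if Nat.eqb k j then 1 else 0) + Tn K (Datatypes.S N)))); [ring|].
        rewrite H. destruct (Nat.eqb k j); ring. }
    rewrite sumL_minus, sumL_scal, sumL_scal, sumL_scal, sumL_kron by lia.
    rewrite <- !sumR_sumL.
    pose proof (Hsol j Hj) as Hs. rewrite A_apply in Hs by auto.
    unfold rhs in Hs. rewrite Hs. field. lra.
Qed.
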